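(* Let $H$ be the face algebra described in the context. The braided Hopf algebra ${}_RH$ decomposes as ${}_RH=\bigoplus_{i\in\mathbb Z_N}H^i$, where each $H^i=\mathrm{span}_{\mathbb C}\{X^i_i(p):p\in\mathbb Z_N\}$ is a Hopf algebra over $\mathbb C1^i$ with unit $1^i=\sum_pX^i_i(p)$ (with the structure $X^i_i(p)X^i_i(q)=\delta_{p,q}X^i_i(p)$, $\underline\Delta(X^i_i(s))=\sum_{w+q=s}X^i_i(w)\otimes X^i_i(q)$, counit $X^i_i(s)\mapsto\delta_{s,0}1^i$, antipode $X^i_i(s)\mapsto X^i_i(-s)$). Moreover, for all $i,j\in\mathbb Z_N$ the linear map $\iota^j_i:H^i\to H^j$, $X^i_i(p)\mapsto X^j_j(p)$, is a Hopf algebra isomorphism.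
   Context: Let $N\ge2$, $\mathbb Z_N=\mathbb Z/N\mathbb Z$, $\omega\in\mathbb C$ a primitive $N$th root of unity. $H$ is the $\mathbb C$-vector space with basis $\{X^i_j(s):i,j,s\in\mathbb Z_N\}$, with multiplication $X^i_j(p)X^k_l(q)=\delta_{j,k}\delta_{p,q}X^i_l(p)$, unit $1=\sum_{i,p}X^i_i(p)$, comultiplication $\Delta(X^i_j(s))=\sum_{p+q=s}X^i_j(p)\otimes X^{i+p}_{j+p}(q)$, counit $\varepsilon(X^i_j(s))=\delta_{s,0}$, antipode $S(X^i_j(p))=X^{j+p}_{i+p}(-p)$, and $R=\sum_{i,j,p}X^i_j(p)\otimes X^j_{j+p}(i-j)\omega^{-p(i-j)}$; $(H,R)$ is a quasitriangular weak Hopf algebra (Hayashi's face algebra). ${}_RH=C_H(H_s)=\{1_1hS(1_2)\}$ is its braided Hopf algebra with adjoint action $h\cdot x=h_1xS(h_2)$, comultiplication $\underline\Delta(x)=x_1S(R^2)\otimes R^1\cdot x_2$, counit $\varepsilon_t(h)=\varepsilon(1_1h)1_2$. *)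

(* Defs.v *)
(* Hayashi's face algebra H over algC (the algebraic
   complex numbers, standing in for C), realised concretely as the free
   vector space on the basis {X^i_j(s) : i,j,s in Z_N}. *)
From HB Require Import structures.
From mathcomp Require Import all_boot all_order all_algebra all_field.
Set Implicit Arguments. Unset Strict Implicit. Unset Printing Implicit Defensive.
Import GRing.Theory Num.Theory.
Local Open Scope ring_scope.

(* basis index (i, j, s) of X^i_j(s) *)
Definition idx (N : nat) : finType := ('Z_N * 'Z_N * 'Z_N)%type.
(* H = span of the X^i_j(s): a vector is its coordinate function *)
Definition H (N : nat) := {ffun idx N -> algC^o}.
(* H (x) H, with basis X(x) (x) X(y) *)
Definition T (N : nat) := {ffun (idx N * idx N) -> algC^o}.
Definition T3 (N : nat) := {ffun (idx N * idx N * idx N) -> algC^o}.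

Section FaceAlgebra.
Variable N : nat.
Variable omega : algC.
Local Notation H := (H N).
Local Notation T := (T N).
Local Notation T3 := (T3 N).

Definition Xe (x : idx N) : H := [ffun t => (t == x)%:R].
Definition X (i j s : 'Z_N) : H := Xe (i, j, s).

Definition tens (a b : H) : T := [ffun t => a t.1 * b t.2].
Definition tens3L (t : T) (c : H) : T3 := [ffun w => t (w.1.1, w.1.2) * c w.2].
Definition tens3R (a : H) (t : T) : T3 := [ffun w => a w.1.1 * t (w.1.2, w.2)].

Definition mulX (x y : idx N) : H :=
  if (x.1.2 == y.1.1) && (x.2 == y.2) then X x.1.1 y.1.2 x.2 else 0.
Definition mul (a b : H) : H := \sum_x \sum_y (a x * b y) *: mulX x y.

Definition one : H := \sum_(i : 'Z_N) \sum_(p : 'Z_N) X i i p.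

Definition DeltaX (x : idx N) : T :=
  \sum_(p : 'Z_N) \sum_(q : 'Z_N | p + q == x.2)
     tens (X x.1.1 x.1.2 p) (X (x.1.1 + p) (x.1.2 + p) q).
Definition Delta (a : H) : T := \sum_x a x *: DeltaX x.

Definition eps (a : H) : algC := \sum_x a x * (x.2 == 0)%:R.

Definition SX (x : idx N) : H := X (x.1.2 + x.2) (x.1.1 + x.2) (- x.2).
Definition S (a : H) : H := \sum_x a x *: SX x.

(* omega^{-k} for k in Z_N (well defined as omega^N = 1) *)
Definition omega_inv_pow (k : 'Z_N) : algC := omega ^+ (val (- k)).

Definition Rmat : T :=
  \sum_(i : 'Z_N) \sum_(j : 'Z_N) \sum_(p : 'Z_N)
     omega_inv_pow (p * (i - j)) *: tens (X i j p) (X j (j + p) (i - j)).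

(* adjoint action h . x = h_1 x S(h_2) *)
Definition ad (h x : H) : H :=
  \sum_(uv : idx N * idx N) (Delta h) uv *: mul (mul (Xe uv.1) x) (S (Xe uv.2)).

(* braided comultiplication x_1 S(R^2) (x) R^1 . x_2 *)
Definition bDelta (x : H) : T :=
  \sum_(yz : idx N * idx N) (Delta x) yz *:
    \sum_(r : idx N * idx N) Rmat r *:
       tens (mul (Xe yz.1) (S (Xe r.2))) (ad (Xe r.1) (Xe yz.2)).

(* eps_t(h) = eps(1_1 h) 1_2 *)
Definition eps_t (h : H) : H :=
  \sum_(uv : idx N * idx N) ((Delta one) uv * eps (mul (Xe uv.1) h)) *: Xe uv.2.

(* membership in _R H = { 1_1 h S(1_2) } *)
Definition in_RH (x : H) : Prop := exists h : H, x = ad one h.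

Definition Hi (i : 'Z_N) : {vspace H} := <<[seq X i i p | p <- enum 'Z_N]>>%VS.

Definition one_i (i : 'Z_N) : H := \sum_(p : 'Z_N) X i i p.

(* the scalar counit of H^i: X^i_i(s) |-> delta_{s,0} (the coefficient of 1^i) *)
Definition eps_i (i : 'Z_N) (x : H) : algC := \sum_(p : 'Z_N) x (i, i, p) * (p == 0)%:R.

Definition S_i (i : 'Z_N) (x : H) : H := \sum_(p : 'Z_N) x (i, i, p) *: X i i (- p).

Definition iota_face (i j : 'Z_N) (x : H) : H := \sum_(p : 'Z_N) x (i, i, p) *: X j j p.

(* t lies in V (x) V and s is a witness decomposition *)
Definition tens_rep (V : {vspace H}) (t : T) (s : seq (H * H)) : Prop :=
  all (fun ab => (ab.1 \in V) && (ab.2 \in V)) s /\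
  t = \sum_(ab <- s) tens ab.1 ab.2.

(* (V, m, u, D, e, Sa) is a Hopf algebra over the ground field
   (all structure maps are considered restricted to V). *)
Definition hopf_on (V : {vspace H}) (m : H -> H -> H) (u : H) (D : H -> T)
    (e : H -> algC) (Sa : H -> H) : Prop :=
  [/\
     [/\ u \in V,
         (forall x y, x \in V -> y \in V -> m x y \in V),
         (forall x, x \in V -> Sa x \in V),
         (forall x, x \in V -> exists s, tens_rep V (D x) s) &
         (forall (a : algC) x y z, x \in V -> y \in V -> z \in V ->
            [/\ m (a *: x + y) z = a *: m x z + m y z,
                m z (a *: x + y) = a *: m z x + m z y,
                D (a *: x + y) = a *: D x + D y,
                e (a *: x + y) = a * e x + e y &
                Sa (a *: x + y) = a *: Sa x + Sa y])],
     (forall x y z, x \in V -> y \in V -> z \in V ->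
        [/\ m (m x y) z = m x (m y z), m u x = x & m x u = x]),
     (forall x s, x \in V -> tens_rep V (D x) s ->
        [/\ \sum_(ab <- s) tens3L (D ab.1) ab.2 = \sum_(ab <- s) tens3R ab.1 (D ab.2),
            \sum_(ab <- s) e ab.1 *: ab.2 = x,
            \sum_(ab <- s) e ab.2 *: ab.1 = x,
            \sum_(ab <- s) m (Sa ab.1) ab.2 = e x *: u &
            \sum_(ab <- s) m ab.1 (Sa ab.2) = e x *: u]),
     (forall x y s s', x \in V -> y \in V -> tens_rep V (D x) s -> tens_rep V (D y) s' ->
        D (m x y) = \sum_(ab <- s) \sum_(cd <- s') tens (m ab.1 cd.1) (m ab.2 cd.2)
        /\ e (m x y) = e x * e y) &
     (D u = tens u u /\ e u = 1)].

Definition hopf_iso (V W : {vspace H}) (f : H -> H)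
    (m : H -> H -> H) (u : H) (D : H -> T) (e : H -> algC) (Sa : H -> H)
    (m' : H -> H -> H) (u' : H) (D' : H -> T) (e' : H -> algC) (Sa' : H -> H) : Prop :=
  [/\ (forall (a : algC) x y, x \in V -> y \in V -> f (a *: x + y) = a *: f x + f y),
      (forall x, x \in V -> f x \in W),
      (forall x y, x \in V -> y \in V -> f x = f y -> x = y),
      (forall y, y \in W -> exists2 x, x \in V & f x = y) &
      [/\ (forall x y, x \in V -> y \in V -> f (m x y) = m' (f x) (f y)),
          f u = u',
          (forall x s, x \in V -> tens_rep V (D x) s ->
             D' (f x) = \sum_(ab <- s) tens (f ab.1) (f ab.2)),
          (forall x, x \in V -> e' (f x) = e x) &
          (forall x, x \in V -> f (Sa x) = Sa' (f x))]].

End FaceAlgebra.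

(* Main.v *)
Require Import Defs.
From HB Require Import structures.
From mathcomp Require Import all_boot all_order all_algebra all_field.
From mathcomp Require Import ring.
Set Implicit Arguments. Unset Strict Implicit. Unset Printing Implicit Defensive.
Import GRing.Theory Num.Theory.
Local Open Scope ring_scope.

Definition lin (V W : lmodType algC) (f : V -> W) :=
  forall (k : algC) x y, f (k *: x + y) = k *: f x + f y.

Lemma lin0 (V W : lmodType algC) (f : V -> W) : lin f -> f 0 = 0.
Proof. move=> hf; have := hf 1 0 0; rewrite addr0 !scale1r => h.
by apply: (@addrI _ (f 0)); rewrite addr0 -h. Qed.

Lemma linZ (V W : lmodType algC) (f : V -> W) : lin f -> forall k x, f (k *: x) = k *: f x.
Proof. by move=> hf k x; rewrite -[k *: x]addr0 hf lin0 // addr0. Qed.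

Lemma linD (V W : lmodType algC) (f : V -> W) : lin f -> forall x y, f (x + y) = f x + f y.
Proof. by move=> hf x y; have := hf 1 x y; rewrite !scale1r. Qed.

Lemma lin_sum (V W : lmodType algC) (f : V -> W) (I : Type) (r : seq I) (P : pred I) F :
  lin f -> f (\sum_(i <- r | P i) F i) = \sum_(i <- r | P i) f (F i).
Proof.
move=> hf; elim: r => [|a r IH]; first by rewrite !big_nil lin0.
by rewrite !big_cons; case: (P a); rewrite ?linD ?IH.
Qed.

Lemma lin_comb (V W : lmodType algC) (f : V -> W) (I : Type) (r : seq I) (P : pred I) (c : I -> algC) F :
  lin f -> f (\sum_(i <- r | P i) c i *: F i) = \sum_(i <- r | P i) c i *: f (F i).
Proof. by move=> hf; rewrite lin_sum //; apply: eq_bigr => i _; rewrite linZ. Qed.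

Lemma lin_coord (I : finType) (W : lmodType algC) (G : I -> W) :
  lin (fun a : {ffun I -> algC^o} => \sum_x a x *: G x).
Proof.
move=> k a b; rewrite scaler_sumr -big_split; apply: eq_bigr => x _.
by rewrite !ffunE scalerDl scalerA.
Qed.

Lemma decomp N (a : H N) : a = \sum_x a x *: Xe x.
Proof.
apply/ffunP => t; rewrite sum_ffunE (bigD1 t) //= big1 ?addr0.
  by rewrite !ffunE eqxx /= -[RHS]/(a t * 1) mulr1.
by move=> x /negbTE hx; rewrite !ffunE eq_sym hx /= scaler0.
Qed.

Lemma sumdl (I : finType) (W : lmodType algC) (k : I) (F : I -> W) :
  \sum_i (i == k)%:R *: F i = F k.
Proof.
rewrite (bigD1 k) //= big1 ?addr0 ?eqxx ?scale1r //.
by move=> i /negbTE ->; rewrite scale0r.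
Qed.

Lemma sumdr (I : finType) (W : lmodType algC) (k : I) (F : I -> W) :
  \sum_i (k == i)%:R *: F i = F k.
Proof. by rewrite -(sumdl k); apply: eq_bigr => i _; rewrite eq_sym. Qed.

Lemma sum_pair N (W : zmodType) (F : 'Z_N -> 'Z_N -> 'Z_N -> W) :
  \sum_(p : 'Z_N) \sum_(a : 'Z_N) \sum_(b : 'Z_N | a + b == p) F p a b
  = \sum_(a : 'Z_N) \sum_(b : 'Z_N) F (a + b) a b.
Proof.
rewrite exchange_big; apply: eq_bigr => a _.
rewrite (exchange_big_dep xpredT) //=; apply: eq_bigr => b _.
by rewrite (big_pred1 (a + b)) // => p; rewrite /= eq_sym.
Qed.

Lemma XeE N (x t : idx N) : Xe x t = (t == x)%:R.
Proof. by rewrite ffunE. Qed.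

Lemma lin_comp (U V W : lmodType algC) (f : V -> W) (g : U -> V) :
  lin f -> lin g -> lin (fun x => f (g x)).
Proof. by move=> hf hg k x y; rewrite hg hf. Qed.

Lemma lin_ext (V W : lmodType algC) (f g : V -> W) : (forall x, f x = g x) -> lin g -> lin f.
Proof. by move=> e hg k x y; rewrite !e hg. Qed.

Lemma tens_linl N (c : H N) : lin (fun a => tens a c).
Proof. move=> k a b; apply/ffunP => t; rewrite !ffunE mulrDl scalerAl //. Qed.

Lemma tens_linr N (a : H N) : lin (tens a).
Proof. move=> k b c; apply/ffunP => t; rewrite !ffunE mulrDr scalerAr //. Qed.

Lemma mulE N (a b : H N) : Defs.mul a b = \sum_x a x *: \sum_y b y *: mulX x y.
Proof. by apply: eq_bigr => x _; rewrite scaler_sumr; apply: eq_bigr => y _; rewrite scalerA. Qed.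

Lemma mulE2 N (a b : H N) : Defs.mul a b = \sum_y b y *: \sum_x a x *: mulX x y.
Proof.
rewrite /Defs.mul exchange_big; apply: eq_bigr => y _; rewrite scaler_sumr.
by apply: eq_bigr => x _; rewrite scalerA mulrC.
Qed.

Lemma mul_linl N (b : H N) : lin (fun a => Defs.mul a b).
Proof. by apply: lin_ext (lin_coord _) => a; rewrite mulE. Qed.

Lemma mul_linr N (a : H N) : lin (Defs.mul a).
Proof. by apply: lin_ext (lin_coord _) => b; rewrite mulE2. Qed.

Lemma mulXeXe N (x y : idx N) : Defs.mul (Xe x) (Xe y) = mulX x y.
Proof.
rewrite mulE (eq_bigr (fun x' => (x' == x)%:R *: \sum_y0 (Xe y) y0 *: mulX x' y0)); last first.
  by move=> x' _; rewrite XeE.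
rewrite sumdl (eq_bigr (fun y' => (y' == y)%:R *: mulX x y')) ?sumdl //.
by move=> y' _; rewrite XeE.
Qed.

Lemma mulXX N (a b c d e f : 'Z_N) :
  Defs.mul (X a b c) (X d e f) = ((b == d) && (c == f))%:R *: X a e c.
Proof. by rewrite mulXeXe /mulX /=; case: ifP => _; rewrite ?scale1r ?scale0r. Qed.

Lemma Delta_lin N : lin (@Delta N).
Proof. exact: lin_coord. Qed.
Lemma S_lin N : lin (@S N).
Proof. exact: lin_coord. Qed.

Lemma DeltaXe N (x : idx N) : Delta (Xe x) = DeltaX x.
Proof.
rewrite /Delta (eq_bigr (fun y => (y == x)%:R *: DeltaX y)) ?sumdl //.
by move=> y _; rewrite XeE.
Qed.
Lemma SXe N (x : idx N) : S (Xe x) = SX x.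
Proof.
rewrite /S (eq_bigr (fun y => (y == x)%:R *: SX y)) ?sumdl //.
by move=> y _; rewrite XeE.
Qed.
Lemma SXX N (a b c : 'Z_N) : S (X a b c) = X (b + c) (a + c) (- c).
Proof. exact: SXe. Qed.
Lemma epsXe N (x : idx N) : eps (Xe x) = (x.2 == 0)%:R.
Proof.
rewrite /eps (eq_bigr (fun y => (y == x)%:R *: ((y.2 == 0)%:R : algC^o))).
  exact: (sumdl (W := algC^o)).
by move=> y _; rewrite XeE.
Qed.
Lemma eps_lin N : lin (W := algC^o) (@eps N).
Proof. exact: (lin_coord (W := algC^o)). Qed.

Definition TG N (W : lmodType algC) (t : T N) (G : idx N * idx N -> W) : W :=
  \sum_uv t uv *: G uv.

Lemma TG_lin N (W : lmodType algC) (G : idx N * idx N -> W) : lin (fun t => TG t G).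
Proof. exact: lin_coord. Qed.

Lemma tensXe N (u v : idx N) uv : tens (Xe u) (Xe v) uv = (uv == (u, v))%:R.
Proof. by case: uv => a b; rewrite !ffunE xpair_eqE /= -natrM mulnb. Qed.

Lemma TG_tens N (W : lmodType algC) (G : idx N * idx N -> W) u v :
  TG (tens (Xe u) (Xe v)) G = G (u, v).
Proof.
rewrite /TG (eq_bigr (fun uv => (uv == (u, v))%:R *: G uv)) ?sumdl //.
by move=> uv _; rewrite tensXe.
Qed.

Lemma TG_DeltaX N (W : lmodType algC) (G : idx N * idx N -> W) (x : idx N) :
  TG (DeltaX x) G = \sum_(p : 'Z_N) \sum_(q : 'Z_N | p + q == x.2)
     G ((x.1.1, x.1.2, p), (x.1.1 + p, x.1.2 + p, q)).
Proof.
rewrite /DeltaX (lin_sum _ _ _ (TG_lin G)); apply: eq_bigr => p _.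
by rewrite (lin_sum _ _ _ (TG_lin G)); apply: eq_bigr => q _; rewrite TG_tens.
Qed.

Lemma TG_Rmat N omega (W : lmodType algC) (G : idx N * idx N -> W) :
  TG (Rmat N omega) G = \sum_(i : 'Z_N) \sum_(j : 'Z_N) \sum_(p : 'Z_N)
     omega_inv_pow omega (p * (i - j)) *: G ((i, j, p), (j, j + p, i - j)).
Proof.
rewrite /Rmat (lin_sum _ _ _ (TG_lin G)); apply: eq_bigr => i _.
rewrite (lin_sum _ _ _ (TG_lin G)); apply: eq_bigr => j _.
rewrite (lin_sum _ _ _ (TG_lin G)); apply: eq_bigr => p _.
by rewrite (linZ (TG_lin G)) TG_tens.
Qed.

Lemma bDeltaE N omega (x : H N) : bDelta omega x =
  TG (Delta x) (fun yz => TG (Rmat N omega)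
     (fun r => tens (Defs.mul (Xe yz.1) (S (Xe r.2))) (ad (Xe r.1) (Xe yz.2)))).
Proof. by []. Qed.

Lemma bDelta_lin N omega : lin (@bDelta N omega).
Proof. apply: lin_ext (lin_comp (TG_lin _) (@Delta_lin N)) => x; exact: bDeltaE. Qed.

Lemma adE N (h x : H N) : ad h x = TG (Delta h) (fun uv => Defs.mul (Defs.mul (Xe uv.1) x) (S (Xe uv.2))).
Proof. by []. Qed.

Lemma ad_linr N (h : H N) : lin (ad h).
Proof.
move=> k x y; rewrite !adE /TG scaler_sumr -big_split; apply: eq_bigr => uv _ /=.
by rewrite (mul_linr _ k) (mul_linl _ k) scalerDr !scalerA mulrC.
Qed.

Lemma mulZl N k (a b : H N) : Defs.mul (k *: a) b = k *: Defs.mul a b.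
Proof. exact: (linZ (mul_linl b)). Qed.
Lemma mulZr N k (a b : H N) : Defs.mul a (k *: b) = k *: Defs.mul a b.
Proof. exact: (linZ (mul_linr a)). Qed.

Lemma sum_only (I : finType) (W : zmodType) (q : I) (F : I -> W) :
  (forall u, u != q -> F u = 0) -> \sum_u F u = F q.
Proof. by move=> h; rewrite (bigD1 q) //= big1 ?addr0 // => u /h. Qed.

Lemma sum_fix N (W : zmodType) (u c : 'Z_N) (F : 'Z_N -> W) :
  \sum_(v : 'Z_N | u + v == c) F v = F (c - u).
Proof.
rewrite (big_pred1 (c - u)) // => v /=.
by apply/eqP/eqP => [<-|->]; ring.
Qed.

Lemma adXX N (a b c k l q : 'Z_N) :
  Defs.ad (X a b c) (X k l q) = ((c == 0) && (b == k) && (l == k))%:R *: X a a q.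
Proof.
rewrite adE DeltaXe TG_DeltaX /=.
under eq_bigr => u _ do rewrite sum_fix !SXX !mulXX mulZl mulXX scalerA.
rewrite (@sum_only _ _ q) => [|u hu]; last by rewrite (negbTE hu) andbF mul0r scale0r.
rewrite eqxx andbT.
have -> : b + q + (c - q) = b + c by ring.
have -> : a + q + (c - q) = a + c by ring.
have -> : - (c - q) = q - c by ring.
have [->|hc] := eqVneq c 0.
  rewrite !addr0 subr0 eqxx andbT andTb -natrM mulnb.
  by case: eqP => [->|].
case: (q =P q - c) => [hq|_]; last by rewrite andbF /= ?mulr0n ?mulr0 !scale0r.
have : q - (q - c) = c by ring.
by rewrite -hq subrr => /esym/eqP; rewrite (negbTE hc).
Qed.

Lemma tensZl N k (a b : H N) : tens (k *: a) b = k *: tens a b.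
Proof. exact: (linZ (tens_linl b)). Qed.
Lemma tensZr N k (a b : H N) : tens a (k *: b) = k *: tens a b.
Proof. exact: (linZ (tens_linr a)). Qed.

Lemma bterm N omega (i p q a b c : 'Z_N) :
  omega_inv_pow omega (c * (a - b)) *:
    tens (Defs.mul (Xe (i, i, p)) (S (Xe (b, b + c, a - b))))
         (ad (Xe (a, b, c)) (Xe (i + p, i + p, q)))
  = (omega_inv_pow omega (c * (a - b)) *
     (((i == a + c) && (p == b - a))%:R * ((c == 0) && (b == i + p))%:R))
     *: tens (X i a p) (X a a q).
Proof.
rewrite SXe /SX /= mulXX adXX tensZl tensZr !scalerA eqxx andbT.
have -> : b + c + (a - b) = a + c by ring.
have -> : b + (a - b) = a by ring.
have -> : - (a - b) = b - a by ring.
by rewrite mulrA.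
Qed.

Lemma oip0 N omega : omega_inv_pow omega (0 : 'Z_N) = 1.
Proof. by rewrite /omega_inv_pow oppr0 expr0. Qed.

Lemma bDeltaXX N omega (i s : 'Z_N) : bDelta omega (X i i s)
  = \sum_(w : 'Z_N) \sum_(q : 'Z_N | w + q == s) tens (X i i w) (X i i q).
Proof.
rewrite bDeltaE DeltaXe TG_DeltaX /=; apply: eq_bigr => p _; apply: eq_bigr => q _.
rewrite TG_Rmat /=.
under eq_bigr => a _ do under eq_bigr => b _ do under eq_bigr => c _ do rewrite bterm.
rewrite (@sum_only _ _ i) => [|a ha].
  rewrite (@sum_only _ _ (i + p)) => [|b hb].
    rewrite (@sum_only _ _ 0) => [|c hc]; last by rewrite (negbTE hc) /= !mulr0 scale0r.
    rewrite mul0r oip0 mul1r addr0 !eqxx /= mulr1.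
    have -> : i + p - i = p by ring.
    by rewrite eqxx scale1r.
  by apply: big1 => c _; rewrite (negbTE hb) andbF /= !mulr0 scale0r.
apply: big1 => b _; apply: big1 => c _.
have [->|hc] := eqVneq c 0; last by rewrite /= ?mulr0n !mulr0 scale0r.
by rewrite addr0 eq_sym (negbTE ha) /= !mul0r mulr0 scale0r.
Qed.

Lemma scaleC (a b : algC) : a *: (b : algC^o) = a * b.
Proof. by []. Qed.

Definition cmb N (i : 'Z_N) (e : 'Z_N -> algC) : H N := \sum_p e p *: X i i p.

Lemma cmbE N (i : 'Z_N) e t :
  cmb i e t = if (t.1.1 == i) && (t.1.2 == i) then e t.2 else 0.
Proof.
rewrite sum_ffunE; case: t => [[a b] c] /=.
rewrite (@sum_only _ _ c) => [|p hp]; rewrite !ffunE !xpair_eqE /=.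
  by rewrite eqxx andbT scaleC; case: (_ && _); rewrite /= ?mulr1 ?mulr0.
by rewrite [c == p]eq_sym (negbTE hp) !andbF scaleC mulr0.
Qed.

Lemma cmb_coef N (i : 'Z_N) e q : cmb i e (i, i, q) = e q.
Proof. by rewrite cmbE /= !eqxx. Qed.

Lemma XinHi N (i p : 'Z_N) : X i i p \in Hi i.
Proof. by apply: memv_span; apply: map_f; rewrite mem_enum. Qed.

Lemma cmb_in N (i : 'Z_N) e : cmb i e \in Hi i.
Proof. by apply: rpred_sum => p _; apply: rpredZ; apply: XinHi. Qed.

Definition QHi N (i : 'Z_N) (x : H N) :=
  forall t : idx N, ~~ ((t.1.1 == i) && (t.1.2 == i)) -> x t = 0.

Lemma Hi_supp N (i : 'Z_N) x : x \in Hi i -> QHi i x.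
Proof.
move=> /coord_span -> t ht; rewrite sum_ffunE big1 // => k _.
rewrite ffunE; set y := _`_k.
suff -> : y t = 0 by rewrite scaler0.
rewrite /y /= (nth_map 0) ?size_tuple // ffunE; case: eqP => // et.
by move: ht; rewrite et /= !eqxx.
Qed.

Lemma supp_cmb N (i : 'Z_N) x : QHi i x -> x = cmb i (fun p => x (i, i, p)).
Proof.
move=> hq; apply/ffunP => t; rewrite cmbE.
case: ifP => [/andP[/eqP h1 /eqP h2]|/negbT h]; last exact: hq.
by case: t h1 h2 {hq} => [[a b] c] /= -> ->.
Qed.

Lemma memHi N (i : 'Z_N) x : x \in Hi i -> x = cmb i (fun p => x (i, i, p)).
Proof. by move/Hi_supp/supp_cmb. Qed.

Lemma cmb_lin N (i : 'Z_N) k e f : k *: cmb i e + cmb i f = cmb i (fun p => k * e p + f p).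
Proof.
rewrite /cmb scaler_sumr -big_split; apply: eq_bigr => p _.
by rewrite scalerA scalerDl.
Qed.

Lemma cmb_ext N (i : 'Z_N) e f : (forall p, e p = f p) -> cmb i e = cmb i f.
Proof. by move=> h; apply: eq_bigr => p _; rewrite h. Qed.

Lemma cmb_inj N (i : 'Z_N) e f : cmb i e = cmb i f -> forall p, e p = f p.
Proof. by move=> h p; rewrite -(cmb_coef i e) h cmb_coef. Qed.

Lemma mul_cmb N (i : 'Z_N) e f :
  Defs.mul (cmb i e) (cmb i f) = cmb i (fun p => e p * f p).
Proof.
rewrite /cmb (lin_comb _ _ _ _ (mul_linl _)); apply: eq_bigr => p _.
rewrite (lin_comb _ _ _ _ (mul_linr _)).
rewrite (@sum_only _ _ p) => [|q hq]; last by rewrite mulXX eq_sym (negbTE hq) andbF scale0r scaler0.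
by rewrite mulXX !eqxx scale1r scalerA mulrC.
Qed.

Definition Dsum N (i : 'Z_N) (e : 'Z_N -> algC) : T N :=
  \sum_w \sum_q e (w + q) *: tens (X i i w) (X i i q).

Lemma bDelta_cmb N omega (i : 'Z_N) e : bDelta omega (cmb i e) = Dsum i e.
Proof.
rewrite /cmb (lin_comb _ _ _ _ (@bDelta_lin N omega)).
under eq_bigr => p _ do rewrite bDeltaXX scaler_sumr; rewrite /=.
under eq_bigr => p _ do under eq_bigr => w _ do rewrite scaler_sumr.
by rewrite (sum_pair (fun p a b => e p *: tens (X i i a) (X i i b))).
Qed.

Lemma one_i_cmb N (i : 'Z_N) : one_i i = cmb i (fun _ => 1).
Proof. by apply: eq_bigr => p _; rewrite scale1r. Qed.

Lemma eps_iE N (i : 'Z_N) x : eps_i i x = x (i, i, 0).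
Proof.
rewrite /eps_i (@sum_only _ _ 0) ?eqxx ?mulr1 // => p hp.
by rewrite (negbTE hp) mulr0.
Qed.

Lemma S_iE N (i : 'Z_N) x : S_i i x = cmb i (fun p => x (i, i, - p)).
Proof.
rewrite /S_i /cmb (reindex_inj (@oppr_inj _)) /=.
by apply: eq_bigr => p _; rewrite opprK.
Qed.

Lemma iotaE N (i j : 'Z_N) x : iota_face i j x = cmb j (fun p => x (i, i, p)).
Proof. by []. Qed.

Definition bilin N (W : lmodType algC) (B : H N -> H N -> W) :=
  (forall b, lin (fun a => B a b)) /\ (forall a, lin (B a)).

Lemma bilinE N (W : lmodType algC) (B : H N -> H N -> W) : bilin B ->
  forall a b, B a b = \sum_u \sum_v (a u * b v) *: B (Xe u) (Xe v).
Proof.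
move=> [hl hr] a b; rewrite {1}(decomp a) (lin_comb _ _ _ _ (hl b)).
apply: eq_bigr => u _; rewrite {1}(decomp b) (lin_comb _ _ _ _ (hr _)) scaler_sumr.
by apply: eq_bigr => v _; rewrite scalerA.
Qed.

Lemma rep_eval N (W : lmodType algC) (B : H N -> H N -> W) (t : T N) s :
  bilin B -> t = \sum_(ab <- s) tens ab.1 ab.2 ->
  \sum_(ab <- s) B ab.1 ab.2 = TG t (fun uv => B (Xe uv.1) (Xe uv.2)).
Proof.
move=> hB ->; rewrite /TG.
under eq_bigr => ab _ do rewrite (bilinE hB) pair_big /=.
rewrite exchange_big /=; apply: eq_bigr => uv _.
by rewrite sum_ffunE scaler_suml; apply: eq_bigr => ab _; rewrite ffunE.
Qed.

Lemma TG_Dsum N (W : lmodType algC) (i : 'Z_N) e (G : idx N * idx N -> W) :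
  TG (Dsum i e) G = \sum_w \sum_q e (w + q) *: G ((i, i, w), (i, i, q)).
Proof.
rewrite /Dsum (lin_sum _ _ _ (TG_lin G)); apply: eq_bigr => w _.
rewrite (lin_sum _ _ _ (TG_lin G)); apply: eq_bigr => q _.
by rewrite (linZ (TG_lin G)) TG_tens.
Qed.

Lemma rep_Dsum N (W : lmodType algC) (B : H N -> H N -> W) (i : 'Z_N) e s :
  bilin B -> Dsum i e = \sum_(ab <- s) tens ab.1 ab.2 ->
  \sum_(ab <- s) B ab.1 ab.2 = \sum_w \sum_q e (w + q) *: B (X i i w) (X i i q).
Proof. by move=> hB hs; rewrite (rep_eval hB hs) TG_Dsum. Qed.

Definition s0 N (i : 'Z_N) (e : 'Z_N -> algC) : seq (H N * H N) :=
  [seq (e (wq.1 + wq.2) *: X i i wq.1, X i i wq.2) | wq <- index_enum ('Z_N * 'Z_N)%type].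

Lemma s0_rep N (i : 'Z_N) e : tens_rep (Hi i) (Dsum i e) (s0 i e).
Proof.
split.
  by apply/allP => ab /mapP [wq _ ->] /=; rewrite rpredZ ?XinHi.
rewrite /s0 big_map /Dsum pair_big /=; apply: eq_bigr => wq _.
by rewrite tensZl.
Qed.

Lemma ad_linl N (x : H N) : lin (fun h => ad h x).
Proof. exact: (lin_comp (TG_lin _) (@Delta_lin N)). Qed.

Lemma ad_one_X N (k l s : 'Z_N) : ad (Defs.one N) (X k l s) = (l == k)%:R *: X k k s.
Proof.
rewrite /Defs.one (lin_sum _ _ _ (ad_linl _)).
under eq_bigr => i _ do rewrite (lin_sum _ _ _ (ad_linl _)).
rewrite (@sum_only _ _ k) => [|i hi]; last first.
  by apply: big1 => p _; rewrite adXX (negbTE hi) andbF /= scale0r.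
rewrite (@sum_only _ _ 0) => [|p hp]; last by rewrite adXX (negbTE hp) /= scale0r.
by rewrite adXX !eqxx.
Qed.

Lemma ad_one_cmb N (i : 'Z_N) e : ad (Defs.one N) (cmb i e) = cmb i e.
Proof.
rewrite /cmb (lin_comb _ _ _ _ (ad_linr _)); apply: eq_bigr => p _.
by rewrite ad_one_X eqxx scale1r.
Qed.

Lemma in_sumHi N (k : 'Z_N) x : x \in Hi k -> x \in (\sum_(i : 'Z_N) Hi i)%VS.
Proof.
move=> hx; apply/memv_sumP; exists (fun j => (j == k)%:R *: x).
  move=> j _; case: eqP => [->|_]; first by rewrite scale1r.
  by rewrite scale0r rpred0.
by rewrite sumdl.
Qed.

Lemma in_RH_iff N (x : H N) : in_RH x <-> x \in (\sum_(i : 'Z_N) Hi i)%VS.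
Proof.
split.
  case=> h ->; rewrite {1}(decomp h) (lin_comb _ _ _ _ (ad_linr _)).
  apply: rpred_sum => [[[k l] s]] _; apply: rpredZ.
  rewrite [Xe _]/(X k l s) ad_one_X; apply: (@in_sumHi _ k).
  by rewrite rpredZ ?XinHi.
case/memv_sumP => vs hvs ->; exists (\sum_i vs i).
rewrite (lin_sum _ _ _ (ad_linr _)); apply: eq_bigr => j _.
by rewrite (memHi (hvs j isT)) ad_one_cmb.
Qed.

Lemma directHi N : directv (\sum_(i : 'Z_N) Hi i)%VS.
Proof.
apply/directv_sum_independent => us hus hsum i _.
rewrite (memHi (hus i isT)); transitivity (cmb i (fun _ => 0)); last first.
  by apply: big1 => p _; rewrite scale0r.
apply: cmb_ext => p.
have := congr1 (fun f : H N => f (i, i, p)) hsum; rewrite /= sum_ffunE ffunE => <-.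
rewrite (@sum_only _ _ i) // => j hj.
by rewrite (memHi (hus j isT)) cmbE /= eq_sym (negbTE hj).
Qed.

Lemma eps_tE N (h : H N) : eps_t h =
  TG (Delta (Defs.one N)) (fun uv => eps (Defs.mul (Xe uv.1) h) *: Xe uv.2).
Proof. by apply: eq_bigr => uv _; rewrite scalerA. Qed.

Lemma eps_t_X N (i s : 'Z_N) : eps_t (X i i s) = (s == 0)%:R *: one_i i.
Proof.
rewrite eps_tE /Defs.one (lin_sum _ _ _ (@Delta_lin N)).
rewrite (lin_sum _ _ _ (TG_lin _)).
under eq_bigr => j _ do rewrite (lin_sum _ _ _ (@Delta_lin N)) (lin_sum _ _ _ (TG_lin _)).
under eq_bigr => j _ do under eq_bigr => p _ do rewrite DeltaXe TG_DeltaX /=.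
under eq_bigr => j _ do rewrite sum_pair.
rewrite (@sum_only _ _ i) => [|j hj]; last first.
  apply: big1 => a _; apply: big1 => b _.
  by rewrite mulXX (negbTE hj) /= scale0r (lin0 (@eps_lin N)) scale0r.
rewrite (bigD1 s) //= [X in _ + X]big1 ?addr0 => [|a ha]; last first.
  apply: big1 => b _.
  by rewrite mulXX (negbTE ha) andbF /= scale0r (lin0 (@eps_lin N)) scale0r.
rewrite /one_i scaler_sumr; apply: eq_bigr => b _.
rewrite mulXX !eqxx scale1r epsXe /=.
by case: eqP => [->|_]; rewrite ?addr0 // !scale0r.
Qed.

Lemma XE N (i j s : 'Z_N) t : X i j s t = (t == (i, j, s))%:R.
Proof. by rewrite ffunE. Qed.

Lemma eps_iX N (i w : 'Z_N) : eps_i i (X i i w) = (w == 0)%:R.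
Proof. by rewrite eps_iE XE !xpair_eqE !eqxx /= eq_sym. Qed.

Lemma S_iX N (i w : 'Z_N) : S_i i (X i i w) = X i i (- w).
Proof.
rewrite /S_i (@sum_only _ _ w) => [|p hp]; first by rewrite XE !eqxx scale1r.
by rewrite XE !xpair_eqE !eqxx /= (negbTE hp) scale0r.
Qed.

Lemma eps_i_lin N (i : 'Z_N) : lin (W := algC^o) (eps_i i).
Proof. by move=> k x y; rewrite !eps_iE !ffunE. Qed.

Lemma S_i_lin N (i : 'Z_N) : lin (S_i i).
Proof. by move=> k x y; rewrite !S_iE cmb_lin; apply: cmb_ext => p; rewrite !ffunE. Qed.

Lemma iota_lin N (i j : 'Z_N) : lin (iota_face i j).
Proof. by move=> k x y; rewrite !iotaE cmb_lin; apply: cmb_ext => p; rewrite !ffunE. Qed.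

Definition tens3 N (a b c : H N) : T3 N := [ffun w => a w.1.1 * b w.1.2 * c w.2].

Lemma tens3LE N (a b c : H N) : tens3L (tens a b) c = tens3 a b c.
Proof. by apply/ffunP => w; rewrite !ffunE. Qed.
Lemma tens3RE N (a b c : H N) : tens3R a (tens b c) = tens3 a b c.
Proof. by apply/ffunP => w; rewrite !ffunE mulrA. Qed.

Lemma tens3L_linl N (c : H N) : lin (fun t => tens3L t c).
Proof. by move=> k a b; apply/ffunP => w; rewrite !ffunE mulrDl scalerAl. Qed.
Lemma tens3L_linr N (t : T N) : lin (tens3L t).
Proof. by move=> k a b; apply/ffunP => w; rewrite !ffunE mulrDr scalerAr. Qed.
Lemma tens3R_linl N (t : T N) : lin (fun a => tens3R a t).
Proof. by move=> k a b; apply/ffunP => w; rewrite !ffunE mulrDl scalerAl. Qed.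
Lemma tens3R_linr N (a : H N) : lin (tens3R a).
Proof. by move=> k b c; apply/ffunP => w; rewrite !ffunE mulrDr scalerAr. Qed.

Lemma lin_scalel N (W : lmodType algC) (f : H N -> algC^o) (v : W) : lin f -> lin (fun a => f a *: v).
Proof. by move=> hf k a b; rewrite hf scalerDl scalerA. Qed.
Lemma lin_scaler (W : lmodType algC) (k0 : algC) : lin (fun a : W => k0 *: a).
Proof. by move=> k a b; rewrite scalerDr !scalerA mulrC. Qed.

Lemma lin_sumf (V W : lmodType algC) (I : finType) (f : I -> V -> W) :
  (forall j, lin (f j)) -> lin (fun x => \sum_j f j x).
Proof.
move=> hf k x y; rewrite scaler_sumr -big_split; apply: eq_bigr => j _; exact: hf.
Qed.

Lemma lin_sZ (V W : lmodType algC) (f : V -> W) (k0 : algC) : lin f -> lin (fun x => k0 *: f x).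
Proof. by move=> hf k x y; rewrite hf scalerDr !scalerA mulrC. Qed.

Lemma sumZX N (i : 'Z_N) (k : algC) : \sum_w k *: X i i (- w) = k *: one_i i.
Proof.
rewrite /one_i scaler_sumr (reindex_inj (@oppr_inj _)) /=.
by apply: eq_bigr => w _; rewrite opprK.
Qed.

Lemma tens3L_bD N omega (i w : 'Z_N) c :
  tens3L (bDelta omega (X i i w)) c =
  \sum_w1 \sum_(w2 | w1 + w2 == w) tens3 (X i i w1) (X i i w2) c.
Proof.
rewrite bDeltaXX (lin_sum _ _ _ (tens3L_linl c)); apply: eq_bigr => w1 _.
rewrite (lin_sum _ _ _ (tens3L_linl c)); apply: eq_bigr => w2 _; exact: tens3LE.
Qed.

Lemma tens3R_bD N omega (i w : 'Z_N) a :
  tens3R a (bDelta omega (X i i w)) =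
  \sum_w1 \sum_(w2 | w1 + w2 == w) tens3 a (X i i w1) (X i i w2).
Proof.
rewrite bDeltaXX (lin_sum _ _ _ (tens3R_linr a)); apply: eq_bigr => w1 _.
rewrite (lin_sum _ _ _ (tens3R_linr a)); apply: eq_bigr => w2 _; exact: tens3RE.
Qed.

Lemma coassoc_rep N omega (i : 'Z_N) e s : Dsum i e = \sum_(ab <- s) tens ab.1 ab.2 ->
  \sum_(ab <- s) tens3L (bDelta omega ab.1) ab.2 = \sum_(ab <- s) tens3R ab.1 (bDelta omega ab.2).
Proof.
move=> hs.
rewrite (rep_Dsum (B := fun a b => tens3L (bDelta omega a) b) _ hs); last first.
  split=> [b|a]; [exact: (lin_comp (tens3L_linl b) (@bDelta_lin N omega)) | exact: tens3L_linr].
rewrite (rep_Dsum (B := fun a b => tens3R a (bDelta omega b)) _ hs); last first.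
  split=> [b|a]; [exact: tens3R_linl | exact: (lin_comp (tens3R_linr a) (@bDelta_lin N omega))].
transitivity (\sum_a \sum_b \sum_c e (a + b + c) *: tens3 (X i i a) (X i i b) (X i i c)).
  rewrite exchange_big /=.
  transitivity (\sum_q \sum_a \sum_b e (a + b + q) *: tens3 (X i i a) (X i i b) (X i i q)).
    apply: eq_bigr => q _.
    rewrite -(sum_pair (fun w a b => e (w + q) *: tens3 (X i i a) (X i i b) (X i i q))).
    apply: eq_bigr => w _; rewrite tens3L_bD scaler_sumr; apply: eq_bigr => w1 _.
    by rewrite scaler_sumr.
  rewrite exchange_big /=; apply: eq_bigr => a _; by rewrite exchange_big.
apply: eq_bigr => w _.
under eq_bigr => a _ do under eq_bigr => b _ do rewrite -addrA.
rewrite -(sum_pair (fun q a b => e (w + q) *: tens3 (X i i w) (X i i a) (X i i b))).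
apply: eq_bigr => q _; rewrite tens3R_bD scaler_sumr; apply: eq_bigr => a _.
by rewrite scaler_sumr.
Qed.

Lemma counitL_rep N (i : 'Z_N) e s : Dsum i e = \sum_(ab <- s) tens ab.1 ab.2 ->
  \sum_(ab <- s) eps_i i ab.1 *: ab.2 = cmb i e.
Proof.
move=> hs; rewrite (rep_Dsum (B := fun a b => eps_i i a *: b) _ hs); last first.
  split=> [b|a]; [exact: (lin_scalel b (eps_i_lin i)) | exact: lin_scaler].
rewrite exchange_big /=; apply: eq_bigr => q _.
rewrite (@sum_only _ _ 0) => [|w hw]; last by rewrite eps_iX (negbTE hw) !scale0r scaler0.
by rewrite eps_iX eqxx scale1r add0r.
Qed.

Lemma counitR_rep N (i : 'Z_N) e s : Dsum i e = \sum_(ab <- s) tens ab.1 ab.2 ->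
  \sum_(ab <- s) eps_i i ab.2 *: ab.1 = cmb i e.
Proof.
move=> hs; rewrite (rep_Dsum (B := fun a b => eps_i i b *: a) _ hs); last first.
  split=> [b|a]; [exact: lin_scaler | exact: (lin_scalel a (eps_i_lin i))].
apply: eq_bigr => w _.
rewrite (@sum_only _ _ 0) => [|q hq]; last by rewrite eps_iX (negbTE hq) !scale0r scaler0.
by rewrite eps_iX eqxx scale1r addr0.
Qed.

Lemma antiL_rep N (i : 'Z_N) e s : Dsum i e = \sum_(ab <- s) tens ab.1 ab.2 ->
  \sum_(ab <- s) Defs.mul (S_i i ab.1) ab.2 = e 0 *: one_i i.
Proof.
move=> hs; rewrite (rep_Dsum (B := fun a b => Defs.mul (S_i i a) b) _ hs); last first.
  split=> [b|a]; [exact: (lin_comp (mul_linl b) (S_i_lin i)) | exact: mul_linr].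
rewrite -sumZX; apply: eq_bigr => w _.
rewrite (@sum_only _ _ (- w)) => [|q hq]; last first.
  by rewrite S_iX mulXX eqxx /= eq_sym (negbTE hq) scale0r scaler0.
by rewrite S_iX mulXX !eqxx scale1r subrr.
Qed.

Lemma antiR_rep N (i : 'Z_N) e s : Dsum i e = \sum_(ab <- s) tens ab.1 ab.2 ->
  \sum_(ab <- s) Defs.mul ab.1 (S_i i ab.2) = e 0 *: one_i i.
Proof.
move=> hs; rewrite (rep_Dsum (B := fun a b => Defs.mul a (S_i i b)) _ hs); last first.
  split=> [b|a]; [exact: mul_linl | exact: (lin_comp (mul_linr a) (S_i_lin i))].
rewrite /one_i scaler_sumr; apply: eq_bigr => w _.
rewrite (@sum_only _ _ (- w)) => [|q hq]; last first.
  rewrite S_iX mulXX eqxx /=; case: eqP => [hw|_]; last by rewrite scale0r scaler0.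
  by move: hq; rewrite hw opprK eqxx.
by rewrite S_iX mulXX !eqxx opprK eqxx scale1r subrr.
Qed.

Lemma bialg_rep N (i : 'Z_N) e f s s' :
  Dsum i e = \sum_(ab <- s) tens ab.1 ab.2 -> Dsum i f = \sum_(ab <- s') tens ab.1 ab.2 ->
  Dsum i (fun p => e p * f p) =
  \sum_(ab <- s) \sum_(cd <- s') tens (Defs.mul ab.1 cd.1) (Defs.mul ab.2 cd.2).
Proof.
move=> hs hs'.
have hB : forall ab : H N * H N, bilin (fun c d => tens (Defs.mul ab.1 c) (Defs.mul ab.2 d)).
  by move=> ab; split=> [d|c]; [exact: (lin_comp (tens_linl _) (mul_linr _)) | exact: (lin_comp (tens_linr _) (mul_linr _))].
under eq_bigr => ab _ do rewrite (rep_Dsum (hB ab) hs').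
rewrite (rep_Dsum (B := fun a b => \sum_w \sum_q f (w + q) *: tens (Defs.mul a (X i i w)) (Defs.mul b (X i i q))) _ hs); last first.
  split=> [b|a]; apply: lin_sumf => w; apply: lin_sumf => q; apply: lin_sZ.
    exact: (lin_comp (tens_linl _) (mul_linl _)).
  exact: (lin_comp (tens_linr _) (mul_linl _)).
apply: eq_bigr => w _; apply: eq_bigr => q _.
rewrite (@sum_only _ _ w) => [|w' hw]; last first.
  by apply: big1 => q' _; rewrite mulXX eqxx eq_sym (negbTE hw) /= scale0r (lin0 (tens_linl _)) scaler0.
rewrite (bigD1 q) //= big1 ?addr0; last first.
  move=> q' hq.
  by rewrite !mulXX !eqxx /= [q == q']eq_sym (negbTE hq) /= scale0r (lin0 (tens_linr _)) scaler0.
by rewrite !mulXX !eqxx /= !scale1r scalerA.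
Qed.

Lemma unit_D N omega (i : 'Z_N) : bDelta omega (one_i i) = tens (one_i i) (one_i i).
Proof.
rewrite one_i_cmb bDelta_cmb -one_i_cmb /one_i (lin_sum _ _ _ (tens_linl _)).
apply: eq_bigr => w _; rewrite (lin_sum _ _ _ (tens_linr _)).
by apply: eq_bigr => q _; rewrite scale1r.
Qed.

Lemma hopf_Hi N omega (i : 'Z_N) :
  hopf_on (Hi i) (@Defs.mul N) (one_i i) (bDelta omega) (eps_i i) (S_i i).
Proof.
split.
- split.
  + by rewrite one_i_cmb cmb_in.
  + by move=> x y hx hy; rewrite (memHi hx) (memHi hy) mul_cmb cmb_in.
  + by move=> x _; rewrite S_iE cmb_in.
  + move=> x hx; rewrite (memHi hx) bDelta_cmb.
    by exists (s0 i (fun p => x (i, i, p))); exact: s0_rep.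
  + move=> a x y z _ _ _; split.
    * exact: mul_linl.
    * exact: mul_linr.
    * exact: bDelta_lin.
    * exact: (eps_i_lin i).
    * exact: S_i_lin.
- move=> x y z hx hy hz; rewrite (memHi hx) (memHi hy) (memHi hz) one_i_cmb !mul_cmb.
  by split; apply: cmb_ext => p; rewrite ?mulrA ?mul1r ?mulr1.
- move=> x s hx [_ hs]; have hx' := memHi hx; rewrite hx' bDelta_cmb in hs.
  split.
  + exact: coassoc_rep hs.
  + by rewrite (counitL_rep hs) -hx'.
  + by rewrite (counitR_rep hs) -hx'.
  + by rewrite (antiL_rep hs) eps_iE.
  + by rewrite (antiR_rep hs) eps_iE.
- move=> x y s s' hx hy [_ hs] [_ hs'].
  have hx' := memHi hx; have hy' := memHi hy.
  rewrite hx' bDelta_cmb in hs; rewrite hy' bDelta_cmb in hs'.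
  rewrite hx' hy' mul_cmb bDelta_cmb (bialg_rep hs hs'); split => //.
  by rewrite !eps_iE !cmb_coef.
- by split; [exact: unit_D | rewrite eps_iE one_i_cmb cmb_coef].
Qed.

Lemma iotaX N (i j w : 'Z_N) : iota_face i j (X i i w) = X j j w.
Proof.
rewrite iotaE /cmb (@sum_only _ _ w) => [|p hp]; first by rewrite XE !eqxx scale1r.
by rewrite XE !xpair_eqE !eqxx /= (negbTE hp) scale0r.
Qed.

Lemma hopf_iota N omega (i j : 'Z_N) :
  hopf_iso (Hi i) (Hi j) (iota_face i j)
    (@Defs.mul N) (one_i i) (bDelta omega) (eps_i i) (S_i i)
    (@Defs.mul N) (one_i j) (bDelta omega) (eps_i j) (S_i j).
Proof.
split.
- by move=> a x y _ _; exact: iota_lin.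
- by move=> x _; rewrite iotaE cmb_in.
- move=> x y hx hy; rewrite !iotaE => /cmb_inj h.
  by rewrite (memHi hx) (memHi hy); apply: cmb_ext.
- move=> y hy; exists (iota_face j i y); first by rewrite iotaE cmb_in.
  by rewrite !iotaE [RHS](memHi hy); apply: cmb_ext => p; rewrite cmb_coef.
split.
- move=> x y hx hy; rewrite (memHi hx) (memHi hy) mul_cmb !iotaE mul_cmb.
  by apply: cmb_ext => p; rewrite !cmb_coef.
- by rewrite !one_i_cmb iotaE; apply: cmb_ext => p; rewrite cmb_coef.
- move=> x s hx [_ hs]; have hx' := memHi hx; rewrite hx' bDelta_cmb in hs.
  have hB : bilin (fun a b => tens (iota_face i j a) (iota_face i j b)).
    split=> [b|a]; [exact: (lin_comp (tens_linl _) (iota_lin _ _)) | exact: (lin_comp (tens_linr _) (iota_lin _ _))].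
  rewrite (rep_Dsum hB hs) hx' iotaE bDelta_cmb /Dsum.
  apply: eq_bigr => w _; apply: eq_bigr => q _.
  by rewrite cmb_coef !iotaX.
- by move=> x hx; rewrite !eps_iE iotaE cmb_coef.
- move=> x hx; rewrite !S_iE !iotaE; apply: cmb_ext => p.
  by rewrite !cmb_coef.
Qed.

Theorem corollary4p5 (N : nat) (omega : algC)
    (hN : (1 < N)%N) (homega : N.-primitive_root omega) :
  (* _R H = (+)_{i in Z_N} H^i *)
  ((forall x : Defs.H N, in_RH x <-> x \in (\sum_(i : 'Z_N) Hi i)%VS)
   /\ directv (\sum_(i : 'Z_N) Hi i)%VS)
  /\
  (forall i : 'Z_N,
     (* the structure induced on H^i *)
     [/\ (forall p q : 'Z_N, Defs.mul (X i i p) (X i i q) = (p == q)%:R *: X i i p),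
         (forall s : 'Z_N, bDelta omega (X i i s)
            = \sum_(w : 'Z_N) \sum_(q : 'Z_N | w + q == s) Defs.tens (X i i w) (X i i q)),
         (forall s : 'Z_N, eps_t (X i i s) = (s == 0)%:R *: one_i i),
         (forall s : 'Z_N, eps_i i (X i i s) = (s == 0)%:R /\ S_i i (X i i s) = X i i (- s)) &
         (* H^i is a Hopf algebra over C 1^i *)
         hopf_on (Hi i) (@Defs.mul N) (one_i i) (bDelta omega) (eps_i i) (S_i i)])
  /\
  (* iota_face^j_i : H^i -> H^j is a Hopf algebra isomorphism *)
  (forall i j : 'Z_N,
     hopf_iso (Hi i) (Hi j) (iota_face i j)
       (@Defs.mul N) (one_i i) (bDelta omega) (eps_i i) (S_i i)
       (@Defs.mul N) (one_i j) (bDelta omega) (eps_i j) (S_i j)).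
Proof.
split; first by split; [exact: in_RH_iff | exact: directHi].
split; last by move=> i j; exact: hopf_iota.
move=> i; split.
- by move=> p q; rewrite mulXX eqxx.
- by move=> s; exact: bDeltaXX.
- exact: eps_t_X.
- by move=> s; split; [exact: eps_iX | exact: S_iX].
- exact: hopf_Hi.
Qed.
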